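(* Let $\epsilon>0$ and let $E\subset\mathbb{R}^2$ be a measurable set with $[0,1]^2\subset E\subset[-\epsilon,1+\epsilon]^2$. Let $0<s''<s'<s<2s''$, and let $a,b$ be real numbers with $0\le a$, $a+s\le 1$, $0\le b-s$, $b\le 1$. Let $v,v',v''\in\mathbb{R}^2$ and suppose that $E_2(b-s,b)$ complements $E_1(a,a+s)+v$, $E_2(b-s',b)$ complements $E_1(a,a+s')+v'$, and $E_2(b-s'',b)$ complements $E_1(a,a+s'')+v''$. Then the points $v,v',v''$ are collinear. Moreover, if $v\neq v''$, the absolute value of the slope of the line through $v$ and $v''$ is at most $\epsilon(2s''-s)^{-1}$.
   Context: Coordinates in $\mathbb{R}^2$ are $(x_1,x_2)$. For $0\le c\le d\le 1$ define $E_1(c,d)=(E\cap\{c\le x_1\le d,\ x_2\le 0\})\cup\{c\le x_1\le d,\ x_2\ge 0\}$ and $E_2(c,d)=(E\cap\{c\le x_1\le d,\ x_2\ge 0\})\cup\{c\le x_1\le d,\ x_2\le 0\}$. Let $S_{c,d}=[c,d]\times\mathbb{R}$. For $v=(v_1,v_2)\in\mathbb{R}^2$ and $0\le c'\le d'\le 1$, we say that $E_2(c,d)$ complements $E_1(c',d')+v$ if, up to sets of Lebesgue measure zero, the sets $E_2(c,d)$ and $E_1(c',d')+v$ are disjoint and their union equals $S_{c,d}$ (so $E_1(c',d')+v$ sits above $E_2(c,d)$, and necessarily $c'+v_1=c$, $d'+v_1=d$). *)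

(* Defs.v *)
From HB Require Import structures.
From mathcomp Require Import all_boot all_order all_algebra.
From mathcomp Require Import all_classical all_reals all_analysis.
Set Implicit Arguments. Unset Strict Implicit. Unset Printing Implicit Defensive.
Import Order.TTheory GRing.Theory Num.Theory.
Local Open Scope classical_set_scope.
Local Open Scope ring_scope.

Definition plane (R : realType) := (measurableTypeR R * measurableTypeR R)%type.

Definition leb2 (R : realType) : set (plane R) -> \bar R :=
  (@lebesgue_measure R \x @lebesgue_measure R)%E.

Definition null2 (R : realType) (A : set (plane R)) : Prop :=
  (@leb2 R).-negligible A.

(* Lebesgue measurable sets of the plane: differ from a Borel set by a null set
   (this is the completion of the product of Borel sigma-algebras). *)
Definition leb_measurable2 (R : realType) (E : set (plane R)) : Prop :=
  exists B : set (plane R), measurable B /\ null2 ((E `\` B) `|` (B `\` E)).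

Definition E1 (R : realType) (E : set (plane R)) (c d : R) : set (plane R) :=
  (E `&` [set x | c <= x.1 <= d /\ x.2 <= 0]) `|` [set x | c <= x.1 <= d /\ 0 <= x.2].

Definition E2 (R : realType) (E : set (plane R)) (c d : R) : set (plane R) :=
  (E `&` [set x | c <= x.1 <= d /\ 0 <= x.2]) `|` [set x | c <= x.1 <= d /\ x.2 <= 0].

Definition strip (R : realType) (c d : R) : set (plane R) :=
  [set x | c <= x.1 <= d].

Definition translate (R : realType) (A : set (plane R)) (v : R * R) : set (plane R) :=
  [set x | A (x.1 - v.1, x.2 - v.2)].

(* "E_2(c,d) complements E_1(c',d') + v": up to null sets, disjoint with union S_{c,d}. *)
Definition complements (R : realType) (E : set (plane R)) (c d c' d' : R) (v : R * R) : Prop :=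
  let A := E2 E c d in
  let B := translate (E1 E c' d') v in
  null2 (A `&` B) /\
  null2 ((strip c d `\` (A `|` B)) `|` ((A `|` B) `\` strip c d)).

Definition square (R : realType) (lo hi : R) : set (plane R) :=
  [set x | lo <= x.1 <= hi /\ lo <= x.2 <= hi].

(* Main.v *)
Require Import Defs.
From mathcomp Require Import all_boot all_order all_algebra.
From mathcomp Require Import all_classical all_reals all_analysis.
From mathcomp Require Import measurable_realfun ring lra.
Import Order.TTheory GRing.Theory Num.Theory.
Set Implicit Arguments. Unset Strict Implicit. Unset Printing Implicit Defensive.
Local Open Scope classical_set_scope.
Local Open Scope ring_scope.

Section S.
Context {R : realType}.
Notation lam := (@lebesgue_measure R).
Definition shf (t : R) : R -> measurableTypeR R := fun x => x - t.

Lemma shift_mf (t : R) : measurable_fun setT (shf t).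
Proof.
by apply: measurable_funB.
Qed.

Lemma lam_shift t (A : set R) : measurable A -> pushforward lam (shf t) A = lam A.
Proof.
move=> mA.
have mf := shift_mf t.
apply/esym/lebesgue_measure_unique => //=.
move=> _ [[a b]] _ <-.
transitivity (lam `](a + t), (b + t)]%classic); last first.
  by congr (lam _); apply/seteqP; split => x /=; rewrite /shf !in_itv /= ?ltrBrDr ?lerBlDr.
rewrite !lebesgue_measure_itv /= !lte_fin ltrD2r.
case: ifP => // _.
by rewrite -!EFinD; congr (_%:E); ring.
Qed.

Lemma lam_shift2 t (A : set R) : measurable A -> lam (shf t @^-1` A) = lam A.
Proof. exact: lam_shift. Qed.

Definition shF (u : R * R) : plane R -> plane R := fun x => (shf u.1 x.1, shf u.2 x.2).

Lemma shF_mf u : measurable_fun setT (shF u).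
Proof.
apply: measurable_fun_pair.
- exact: (measurableT_comp (shift_mf u.1) measurable_fst).
- exact: (measurableT_comp (shift_mf u.2) measurable_snd).
Qed.

Lemma shf_meas t (A : set R) : measurable A -> measurable (shf t @^-1` A).
Proof. by move=> mA; rewrite -[X in measurable X]setTI; exact: shift_mf. Qed.

Lemma leb2_shift u (X : set (plane R)) : measurable X ->
  pushforward (lam \x lam)%E (shF u) X = (lam \x lam)%E X.
Proof.
move=> mX.
have mf := shF_mf u.
apply/esym/product_measure_unique => // A B mA mB.
transitivity ((lam \x lam)%E ((shf u.1 @^-1` A) `*` (shf u.2 @^-1` B))); first by [].
rewrite product_measure1E ?shf_meas //.
by congr (_ * _)%E; [exact: lam_shift2 mA | exact: lam_shift2 mB].
- exact: shf_meas.
- exact: shf_meas.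
Qed.

Lemma null2_translate (A : set (plane R)) u : null2 A -> null2 (translate A u).
Proof.
move=> [N [mN N0 AN]]; exists (shF u @^-1` N); split.
- by rewrite -[X in measurable X]setTI; exact: shF_mf.
- by rewrite -[LHS]/(pushforward (lam \x lam)%E (shF u) N) leb2_shift.
- by move=> x /= /AN.
Qed.

Lemma rect_not_null p q c e : p < q -> c < e ->
  ~ null2 [set x : plane R | (p <= x.1 <= q) /\ (c <= x.2 <= e)].
Proof.
move=> pq ce [N [mN N0 sub]].
have N0' : (lam \x lam)%E N = 0%E := N0.
have H : ((lam \x lam)%E (`[p, q]%classic `*` `[c, e]%classic) <= (lam \x lam)%E N)%E.
  apply: le_measure; rewrite ?inE.
  - by apply: measurableX.
  - exact: mN.
  - move=> [x y] /= [] ; rewrite !in_itv /= => H1 H2; exact: sub.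
have : ((lam \x lam)%E (`[p, q]%classic `*` `[c, e]%classic) <= 0)%E.
  apply: (le_trans H); rewrite le_eqVlt; apply/orP; left; apply/eqP; exact: N0'.
rewrite product_measure1E //.
change ((lam `[p, q]%classic * lam `[c, e]%classic <= 0)%E -> False).
rewrite !lebesgue_measure_itv /= !lte_fin pq ce.
change ((((q - p) * (e - c))%:E <= (0:R)%:E)%E -> False).
rewrite lee_fin => H0.
have : 0 < (q - p) * (e - c) by apply: mulr_gt0; rewrite subr_gt0.
by rewrite ltNge H0.
Qed.

Lemma nullS (A B : set (plane R)) : null2 A -> B `<=` A -> null2 B.
Proof. by move=> nA BA; exact: (negligibleS BA nA). Qed.

Lemma nullU (A B : set (plane R)) : null2 A -> null2 B -> null2 (A `|` B).
Proof. by move=> nA nB; exact: negligibleU. Qed.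

Lemma null0 : null2 (@set0 (plane R)).
Proof. exact: negligible_set0. Qed.

Definition symd (X Y : set (plane R)) := (X `\` Y) `|` (Y `\` X).

Lemma symd_trans X Y Z : null2 (symd X Y) -> null2 (symd Y Z) -> null2 (symd X Z).
Proof.
move=> h1 h2; apply: nullS (nullU h1 h2) _ => x [[Xx nZx]|[Zx nXx]].
- by have [Yx|nYx] := pselect (Y x); [right; left|left; left].
- by have [Yx|nYx] := pselect (Y x); [left; right|right; right].
Qed.

Lemma symd_sym X Y : null2 (symd X Y) -> null2 (symd Y X).
Proof. by move=> h; apply: nullS h _ => x [h1|h1]; [right|left]. Qed.

Definition vadd (u u' : R * R) : R * R := (u.1 + u'.1, u.2 + u'.2).
Definition vopp (u : R * R) : R * R := (- u.1, - u.2).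

Lemma translate_comp (X : set (plane R)) u u' :
  translate (translate X u) u' = translate X (vadd u u').
Proof.
apply/funext => x; rewrite /translate /vadd /=.
by congr X; congr pair; ring.
Qed.

Lemma translate0 (X : set (plane R)) (u : R * R) : u.1 = 0 -> u.2 = 0 -> translate X u = X.
Proof.
move=> h1 h2; apply/funext => -[x1 x2]; rewrite /translate /= h1 h2 !subr0 //.
Qed.

Lemma translate_strip (c d : R) (u : R * R) : translate (strip c d) u = strip (c + u.1) (d + u.1).
Proof.
apply/funext => x; rewrite /translate /strip /=.
by rewrite lerBrDr lerBlDr.
Qed.

Definition Rel (G : set (plane R)) (u : R * R) (p q : R) :=
  null2 (symd (translate G u `&` strip p q) (G `&` strip p q)).

Lemma Rsub (G : set (plane R)) (u : R * R) (p q p2 q2 : R) : Rel G u p q -> p <= p2 -> q2 <= q -> Rel G u p2 q2.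
Proof.
move=> h pp qq; apply: nullS h _.
have sub : forall x, strip p2 q2 x -> strip p q x.
  move=> x; rewrite /strip /= => /andP[h1 h2]; apply/andP; split; lra.
by move=> x [[[h1 h2] h3]|[[h1 h2] h3]]; [left|right]; split=> //;
   [split=> //; exact: sub| move=> [? ?]; apply: h3; split| split=> //; exact: sub | move=> [? ?]; apply: h3; split].
Qed.

Lemma translate_symd X Y (u : R * R) :
  translate (symd X Y) u = symd (translate X u) (translate Y u).
Proof. by []. Qed.

Lemma translate_setI (X Y : set (plane R)) (u : R * R) :
  translate (X `&` Y) u = translate X u `&` translate Y u.
Proof. by []. Qed.

Lemma Rcomp G u u' p q : Rel G u p q -> Rel G u' (p - u.1) (q - u.1) ->
  Rel G (vadd u' u) p q.
Proof.
move=> h1 /(null2_translate u).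
rewrite translate_symd !translate_setI translate_comp !translate_strip !subrK => h2.
exact: symd_trans h2 h1.
Qed.

Lemma Rinv G u p q : Rel G u p q -> Rel G (vopp u) (p - u.1) (q - u.1).
Proof.
move=> /(null2_translate (vopp u)).
rewrite translate_symd !translate_setI translate_comp !translate_strip.
rewrite translate0 /vadd /vopp /= ?subrr // => h.
exact: symd_sym.
Qed.

Lemma Rzero G p q : Rel G (0, 0) p q.
Proof.
rewrite /Rel translate0 //.
apply: (nullS null0) => x [[h1 h2]|[h1 h2]]; exact: h2.
Qed.
Lemma Bnd (eps a s : R) (E : set (plane R)) (u : R * R) (p q : R) :
  E `<=` square (-eps) (1 + eps) -> 0 < eps ->
  Rel (E1 E a (a + s)) u p q -> p < q -> a <= p -> q <= a + s ->
  a <= p - u.1 -> q - u.1 <= a + s -> `|u.2| <= eps.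
Proof.
move=> sub e0 h pq ap qs apu qsu.
have Glow : forall y, E1 E a (a + s) y -> - eps <= y.2.
  move=> y [[/sub [_ /andP[h1 _]] _]| [_ h2]] //; lra.
have Gup : forall y, a <= y.1 <= a + s -> 0 <= y.2 -> E1 E a (a + s) y.
  by move=> y h1 h2; right; split.
have [H|H] := lerP `|u.2| eps => //; exfalso.
have [u2p|u2n] := lerP 0 u.2.
- rewrite ger0_norm // in H.
  apply: (@rect_not_null p q 0 ((u.2 - eps) / 2)); first by [].
    lra.
  apply: nullS h _ => x /= [/andP[x1 x2] /andP[y1 y2]]; right; split.
    split; last by rewrite /strip; apply/andP; split.
    by apply: Gup => //; apply/andP; split; lra.
  move=> [/Glow /= ? _]; lra.
- rewrite ltr0_norm // in H.
  apply: (@rect_not_null p q u.2 ((u.2 - eps) / 2)); first by [].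
    lra.
  apply: nullS h _ => x /= [/andP[x1 x2] /andP[y1 y2]]; left; split.
    split; last by rewrite /strip; apply/andP; split.
    by apply: Gup => /=; [apply/andP; split; lra | lra].
  move=> [/Glow /= ? _]; lra.
Qed.
Lemma vfirst (eps : R) (E : set (plane R)) (c d c' d' : R) (v : R * R) :
  0 < eps -> E `<=` square (-eps) (1 + eps) -> c < d -> d' - c' = d - c ->
  complements E c d c' d' v -> v.1 = c - c'.
Proof.
move=> e0 sub cd len [_ hX].
have L1 : forall k, 0 < k -> k <= d - c -> c' + v.1 + k < c -> False.
  move=> k k0 kd kc.
  apply: (@rect_not_null (c' + v.1) (c' + v.1 + k) v.2 (v.2 + 1)); [lra|lra|].
  apply: nullS hX _ => x /= [/andP[x1 x2] /andP[y1 y2]]; right; split.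
    right; rewrite /translate /E1 /=; right; split; last by lra.
    by apply/andP; split; lra.
  by rewrite /strip /= => /andP[? ?]; lra.
have L2 : forall k, 0 < k -> k <= d - c -> c + k < c' + v.1 -> False.
  move=> k k0 kd kc.
  apply: (@rect_not_null c (c + k) (2 + eps) (3 + eps)); [lra|lra|].
  apply: nullS hX _ => x /= [/andP[x1 x2] /andP[y1 y2]]; left; split.
    by rewrite /strip /=; apply/andP; split; lra.
  move=> [].
    move=> [[/sub [_ /andP[_ h]] _]|[_ h]]; lra.
  rewrite /translate /E1 /= => -[[_ [/andP[h _] _]]|[/andP[h _] _]]; lra.
have [H|H|H] := ltgtP v.1 (c - c') => //.
- have [h|h] := lerP (c - c' - v.1) (d - c).
    by exfalso; apply: (L1 ((c - c' - v.1) / 2)); lra.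
  by exfalso; apply: (L1 ((d - c) / 2)); lra.
- have [h|h] := lerP (v.1 - (c - c')) (d - c).
    by exfalso; apply: (L2 ((v.1 - (c - c')) / 2)); lra.
  by exfalso; apply: (L2 ((d - c) / 2)); lra.
Qed.
Lemma inW (c d c' d' x : R) : c' <= c -> d <= d' -> c <= x <= d -> c' <= x <= d'.
Proof. by move=> h1 h2 /andP[h3 h4]; apply/andP; split; lra. Qed.

Lemma E1_split (E : set (plane R)) (a s s1 : R) : s1 <= s ->
  E1 E a (a + s1) = E1 E a (a + s) `&` strip a (a + s1).
Proof.
move=> ss; apply/seteqP; split => x.
- move=> [[Ex h]|h]; split; rewrite /strip /=; try (by case: h).
  + by left; split=> //; case: h => h1 h2; split=> //; apply: inW h1; lra.
  + by right; case: h => h1 h2; split=> //; apply: inW h1; lra.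
- by move=> [[[Ex [h1 h2]]|[h1 h2]] h3]; [left|right].
Qed.

Lemma base (E : set (plane R)) (a b s s1 : R) (v v1 : R * R) :
  s1 <= s ->
  complements E (b - s) b a (a + s) v -> complements E (b - s1) b a (a + s1) v1 ->
  v1.1 = b - s1 - a ->
  Rel (E1 E a (a + s)) (vadd v (vopp v1)) a (a + s1).
Proof.
move=> ss; rewrite /complements /= => -[hAB hX] [hAB1 hX1] hv.
have A1A : forall x, E2 E (b - s1) b x -> E2 E (b - s) b x.
  move=> x [[Ex [h1 h2]]|[h1 h2]]; [left|right]; do ?split => //; apply: inW h1; lra.
have AA1 : forall x, E2 E (b - s) b x -> strip (b - s1) b x -> E2 E (b - s1) b x.
  by move=> x [[Ex [h1 h2]]|[h1 h2]] h3; [left|right].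
have S1S : forall x, strip (b - s1) b x -> strip (b - s) b x.
  by move=> x h; apply: inW h; lra.
have key : null2 (symd (translate (E1 E a (a + s)) v `&` strip (b - s1) b)
                       (translate (E1 E a (a + s1)) v1)).
  apply: nullS (nullU (nullU hAB hAB1) (nullU hX hX1)) _.
  move=> x [[[Bx S1x] nB1x]|[B1x nBS1]].
  - have [Ax|nAx] := pselect (E2 E (b - s) b x).
      by left; left; split.
    by right; right; left; split => // -[/A1A|] //.
  - have [S1x|nS1x] := pselect (strip (b - s1) b x).
      have nBx : ~ translate (E1 E a (a + s)) v x by move=> Bx; apply: nBS1.
      have [Ax|nAx] := pselect (E2 E (b - s) b x).
        by left; right; split => //; apply: AA1.
      by right; left; left; split; [apply: S1S | case].
    by right; right; right; split => //; right.
move: (null2_translate (vopp v1) key).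
rewrite translate_symd translate_setI !translate_comp translate_strip.
rewrite (@translate0 _ (vadd v1 (vopp v1))) /vadd /vopp /= ?subrr //.
have -> : b - s1 + - v1.1 = a by rewrite hv; ring.
have -> : b + - v1.1 = a + s1 by rewrite hv; ring.
rewrite (E1_split _ _ ss) => h.
exact: h.
Qed.
End S.

Theorem lemma3p1 (R : realType) (eps : R) (E : set (plane R))
  (s s' s'' a b : R) (v v' v'' : R * R) :
  0 < eps ->
  leb_measurable2 E ->
  square 0 1 `<=` E -> E `<=` square (- eps) (1 + eps) ->
  0 < s'' -> s'' < s' -> s' < s -> s < 2 * s'' ->
  0 <= a -> a + s <= 1 -> 0 <= b - s -> b <= 1 ->
  complements E (b - s) b a (a + s) v ->
  complements E (b - s') b a (a + s') v' ->
  complements E (b - s'') b a (a + s'') v'' ->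
  (v'.1 - v.1) * (v''.2 - v.2) = (v'.2 - v.2) * (v''.1 - v.1) /\
  (v <> v'' ->
     v''.1 != v.1 /\
     `|(v''.2 - v.2) / (v''.1 - v.1)| <= eps / (2 * s'' - s)).
Proof.
move=> e0 _ _ sqE s0 s21 s10 s2 a0 as1 bs b1 C1 C2 C3.
have hv : v.1 = b - s - a.
  by apply: (vfirst e0 sqE _ _ C1); lra.
have hv' : v'.1 = b - s' - a.
  by apply: (vfirst e0 sqE _ _ C2); lra.
have hv'' : v''.1 = b - s'' - a.
  by apply: (vfirst e0 sqE _ _ C3); lra.
have Rw := base (ltW (lt_trans s21 s10)) C1 C3 hv''.
have Rw' := base (ltW s10) C1 C2 hv'.
set G := E1 E a (a + s) in Rw Rw'.
set w := vadd v (vopp v'') in Rw.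
set w' := vadd v (vopp v') in Rw'.
set d := s - s''.
set d' := s - s'.
have w1 : w.1 = - d by rewrite /w /vadd /vopp /= hv hv'' /d; ring.
have w'1 : w'.1 = - d' by rewrite /w' /vadd /vopp /= hv hv' /d'; ring.
have w2 : w.2 = v.2 - v''.2 by [].
have w'2 : w'.2 = v.2 - v'.2 by [].
clearbody w w'.
set al := w.2.
set be := w'.2.
have d0 : 0 < d by rewrite /d; lra.
have d'0 : 0 < d' by rewrite /d'; lra.
have dd' : d' < d by rewrite /d /d'; lra.
have ds' : d <= s' by rewrite /d; lra.
have d's'' : d' <= s'' by rewrite /d'; lra.
have dsum : s'' + d = s by rewrite /d; ring.
split.
- set C := be * d - d' * al.
  have Inv : forall n : nat, exists u : R * R, exists p q : R,
      [/\ p < q, a <= p, q <= a + d, a <= p - u.1 & q - u.1 <= a + d] /\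
      (Rel G u p q /\ u.2 * d = n%:R * C - u.1 * al).
    elim.
      exists (0, 0), a, (a + d); split; first by split => /=; lra.
      by split; [exact: Rzero | rewrite /=; ring].
    move=> n [u [p [q [[pq ap qd apu qdu] [Ru equ]]]]].
    have R1 : Rel G (vadd w' u) p q.
      apply: Rcomp Ru (Rsub Rw' _ _); lra.
    have eq1 : (vadd w' u).2 * d = n.+1%:R * C - (vadd w' u).1 * al.
      rewrite /vadd /= -natr1 w'1 mulrDl equ /C; ring.
    have u11 : (vadd w' u).1 = - d' + u.1 by rewrite /vadd /= w'1.
    have stepB : forall p0, p0 < q -> p <= p0 -> a + d <= p0 - (vadd w' u).1 ->
      exists u2 : R * R, exists p2 q2 : R,
      [/\ p2 < q2, a <= p2, q2 <= a + d, a <= p2 - u2.1 & q2 - u2.1 <= a + d] /\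
      (Rel G u2 p2 q2 /\ u2.2 * d = n.+1%:R * C - u2.1 * al).
      move=> p0 p0q pp0; rewrite u11 => hp0.
      have R2 : Rel G (vadd (vopp w) (vadd w' u)) p0 q.
        apply: Rcomp (Rsub R1 pp0 (lexx q)) (Rsub (Rinv Rw) _ _); rewrite w1 u11; lra.
      have e2 : (vadd (vopp w) (vadd w' u)).2 = - al + (vadd w' u).2 by [].
      have e1 : (vadd (vopp w) (vadd w' u)).1 = d + (vadd w' u).1.
        by rewrite {1}/vadd /vopp /= w1 opprK.
      exists (vadd (vopp w) (vadd w' u)), p0, q; split.
        rewrite e1 u11; split; lra.
      split => //.
      rewrite e2 e1 mulrDl eq1; ring.
    have [hA|hB] := lerP (q - (vadd w' u).1) (a + d).
      exists (vadd w' u), p, q; split; last by split.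
      by rewrite u11; split; lra.
    have [hB1|hC] := lerP (a + d) (p - (vadd w' u).1).
      exact: (stepB p pq (lexx p) hB1).
    apply: (stepB (a + d + (vadd w' u).1)).
    - by clear -hB; rewrite ltrBrDl addrC in hB.
    - by clear -hC; move: hC; rewrite ltrBlDr => /ltW.
    - by rewrite addrK.
  have C0 : C = 0.
    apply/eqP; apply/negP => /negP Cn.
    have Cp : 0 < `|C| by rewrite normr_gt0.
    set M := (eps * d + d * `|al|) / `|C|.
    have M0 : 0 <= M by rewrite /M divr_ge0 // addr_ge0 // mulr_ge0 //; lra.
    have := archi_boundP M0; set n := Num.Def.archi_bound M => Mn.
    have [u [p [q [[pq ap qd apu qdu] [Ru equ]]]]] := Inv n.
    have hu2 : `|u.2| <= eps.
      by apply: (Bnd sqE e0 Ru); lra.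
    have hu1 : `|u.1| <= d by rewrite ler_norml; apply/andP; split; lra.
    have : n%:R * `|C| <= eps * d + d * `|al|.
      have -> : n%:R * `|C| = `|u.2 * d + u.1 * al|.
        by rewrite -normr_nat -normrM; congr `|_|; rewrite equ; ring.
      apply: le_trans (ler_normD _ _) _; rewrite !normrM (gtr0_norm d0).
      apply: lerD; first by apply: ler_wpM2r; lra.
      by apply: ler_wpM2r.
    rewrite -ler_pdivlMr // -/M => h; lra.
  rewrite hv hv' hv''.
  have eal : v''.2 - v.2 = - al by rewrite /al w2; ring.
  have ebe : v'.2 - v.2 = - be by rewrite /be w'2; ring.
  rewrite eal ebe.
  apply/eqP; rewrite -subr_eq0; apply/eqP.
  rewrite -C0 /C /d /d'; ring.
- move=> _.
  have e1 : v''.1 - v.1 = d by rewrite hv hv'' /d; ring.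
  have eal : v''.2 - v.2 = - al by rewrite /al w2; ring.
  split; first by apply/eqP => h; move: e1; rewrite h subrr; lra.
  rewrite e1 eal normrM normrN normrV ?unitfE ?gt_eqF // (gtr0_norm d0).
  pose kw (k : nat) : R * R := (k%:R * w.1, k%:R * w.2).
  have Kk : forall k : nat, (k%:R - 1) * d < s'' ->
      Rel G (kw k) a (a + s'' - (k%:R - 1) * d).
    elim.
      move=> _; have -> : kw 0%N = (0, 0) by rewrite /kw /= !mul0r.
      exact: Rzero.
    move=> k IH hk.
    have k0 : 0 <= k%:R :> R by [].
    have kd0 : 0 <= k%:R * d by apply: mulr_ge0 => //; exact: ltW.
    move: hk; rewrite -natr1 addrK => hk.
    have hk' : (k%:R - 1) * d < s''.
      by rewrite mulrBl mul1r; lra.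
    have R1 := IH hk'.
    have -> : kw k.+1 = vadd w (kw k).
      by rewrite /kw /vadd /= -natr1; congr pair; ring.
    apply: Rcomp (Rsub R1 (lexx a) _) (Rsub Rw _ _); rewrite /kw /= ?w1 ?mulrN ?mulrBl ?mul1r; lra.
  have exK : exists k : nat, (fun k => s'' <= k%:R * d) k.
    have N0 : 0 <= s'' / d by rewrite divr_ge0 //; lra.
    exists (Num.Def.archi_bound (s'' / d)); apply: ltW.
    by rewrite -ltr_pdivrMr //; exact: archi_boundP.
  case: (ex_minnP exK) => k hk kmin.
  case: k hk kmin => [|m] hk kmin.
    by move: hk; rewrite mul0r; lra.
  have hm : m%:R * d < s''.
    rewrite ltNge; apply/negP => h.
    by have := kmin m h; rewrite ltnn.
  have md0 : 0 <= m%:R * d by apply: mulr_ge0 => //; exact: ltW.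
  have Rk' : Rel G (kw m.+1) a (a + s'' - m%:R * d).
    have := Kk m.+1; rewrite -natr1 addrK; apply; lra.
  have hb := Bnd sqE e0 Rk'.
  have hb2 : `|(kw m.+1).2| <= eps.
    by apply: hb; rewrite /kw /= ?w1 ?mulrN -?natr1 ?mulrDl ?mul1r; lra.
  move: hb2; rewrite /kw /= normrM normr_nat => hb2.
  rewrite ler_pdivrMr // mulrAC ler_pdivlMr; last by lra.
  have al0 : 0 <= `|al| by [].
  apply: (@le_trans _ _ (`|al| * s'')).
    by apply: ler_wpM2l => //; lra.
  apply: (@le_trans _ _ (`|al| * (m.+1%:R * d))).
    by apply: ler_wpM2l.
  by rewrite mulrA [`|al| * _]mulrC; apply: ler_wpM2r => //; exact: ltW.
Qed.
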